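(* Let $0<\ell_{\min}\le \ell_{\max}$ and a speedup $s\ge 1$ be given, and let $\gamma$ be the smallest non-negative integer such that $\frac{\gamma\ell_{\min}+\ell_{\max}}{s}\le(\gamma+1)\ell_{\min}$ (for $s>1$, $\gamma=\max\{\lceil \frac{\ell_{\max}-s\ell_{\min}}{(s-1)\ell_{\min}}\rceil,0\}$). If (a) $s<\frac{\ell_{\max}}{\ell_{\min}}$ and (b) $s<\frac{\gamma\ell_{\min}+\ell_{\max}}{\ell_{\max}}$, then no deterministic online algorithm is competitive when run with speedup $s$ against an adversary injecting tasks with costs in $[\ell_{\min},\ell_{\max}]$, even in a system with a single processor.
   Context: Model: $n$ processors with ids $1,\dots,n$ and a shared repository. An adversarial pattern $\mathcal{A}$ is a set of timed events: task injections (each task has a unique id, an arrival time equal to its injection time, and a cost $\ell\in[\ell_{\min},\ell_{\max}]$), processor crashes and processor restarts. A task is pending at time $t$ if it has been injected by time $t$ and no processor has yet reported its completion. A processor works in cycles: it obtains the set of currently pending tasks from the repository (if none, it waits until a task is injected), chooses one, executes it, and reports its completion, after which the task is no longer pending; obtaining and reporting take no time. With speedup $s\ge1$ executing a task of cost $\ell$ takes time $\ell/s$. Execution is non-preemptive and atomic: if the processor crashes before finishing and reporting, no progress is kept. A crashed processor does nothing until restarted; on restart it remembers only the algorithm and $n$, and starts a new cycle. At any time, reports are processed before injections, which are processed before requests for the pending set. Online algorithms are deterministic, do not know $\mathcal{A}$ in advance, and are work conserving (an alive processor never idles while tasks are pending and never abandons a started task). For algorithm ALG, $\mathcal{C}_t(\mathrm{ALG},\mathcal{A})$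 is the total cost and $\mathcal{T}_t(\mathrm{ALG},\mathcal{A})$ the number of pending tasks at time $t$. $\mathcal{C}_t(\mathrm{OPT},\mathcal{A})$ (resp. $\mathcal{T}_t(\mathrm{OPT},\mathcal{A})$) is the minimum (infimum) of that quantity at time $t$ over all offline algorithms knowing $\mathcal{A}$ in advance, with unlimited computational power, running under $\mathcal{A}$ with speedup $1$. ALG is $x$-pending-cost competitive if there is $\Delta$ independent of $\mathcal{A}$ with $\mathcal{C}_t(\mathrm{ALG},\mathcal{A})\le x\,\mathcal{C}_t(\mathrm{OPT},\mathcal{A})+\Delta$ for all $t$ and all $\mathcal{A}$; $x$-pending-task competitive is defined analogously with $\mathcal{T}$. ''Competitive'' means $x$-pending-cost or $x$-pending-task competitive for some finite $x$. *)

(* Defs.v *)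
From Stdlib Require Import Reals Lra List ClassicalEpsilon.
Open Scope R_scope.

Record task := Task { tid : nat; arr : R; cost : R }.

(* A crash (pe_crash = true) or restart (pe_crash = false) event of
   processor pe_proc at time pe_time. *)
Record pevent := PEv { pe_crash : bool; pe_proc : nat; pe_time : R }.

Record pattern := Pattern { tasks : list task; pevents : list pevent }.

Definition wf_pattern (lmin lmax : R) (A : pattern) : Prop :=
  NoDup (map tid (tasks A)) /\
  (forall tau, In tau (tasks A) -> 0 <= arr tau /\ lmin <= cost tau <= lmax) /\
  (forall e, In e (pevents A) -> 0 <= pe_time e) /\
  (forall e e', In e (pevents A) -> In e' (pevents A) ->
     pe_proc e = pe_proc e' -> pe_time e = pe_time e' -> e = e').

Definition crash_at (A : pattern) (p : nat) (c : R) : Prop :=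
  In (PEv true p c) (pevents A).
Definition restart_at (A : pattern) (p : nat) (r : R) : Prop :=
  In (PEv false p r) (pevents A).

(* Processor p is alive at time t (after processing the events at time t):
   every crash up to t has been followed by a restart up to t.
   Processors are alive initially. *)
Definition alive (A : pattern) (p : nat) (t : R) : Prop :=
  forall c, crash_at A p c -> c <= t ->
    exists r, restart_at A p r /\ c < r <= t.

(* A schedule: S p tau t  means processor p starts executing task tau at
   time t (begins a cycle by choosing tau). *)
Definition schedule := nat -> task -> R -> Prop.

Definition completed (A : pattern) (S : schedule) (s : R) (tau : task) (t : R)
  : Prop :=
  exists p t0, S p tau t0 /\ t0 + cost tau / s <= t /\
    forall c, crash_at A p c -> ~ (t0 < c /\ c < t0 + cost tau / s).

(* Pending at time t: injected by time t, completion not yet reported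
   (reports at time t are processed before requests at time t). *)
Definition pending (A : pattern) (S : schedule) (s : R) (tau : task) (t : R)
  : Prop :=
  In tau (tasks A) /\ arr tau <= t /\ ~ completed A S s tau t.

Definition pend_cost (A : pattern) (S : schedule) (s t : R) : R :=
  fold_right Rplus 0
    (map (fun tau => if excluded_middle_informative (pending A S s tau t)
                     then cost tau else 0) (tasks A)).

Definition pend_num (A : pattern) (S : schedule) (s t : R) : R :=
  fold_right Rplus 0
    (map (fun tau => if excluded_middle_informative (pending A S s tau t)
                     then 1 else 0) (tasks A)).

(* Feasibility of a schedule for n processors with speedup s under A:
   only processors 1..n work, only when alive, only on pending tasks, and a
   processor starts a new cycle only after finishing the previous task or
   after having crashed in between (execution is atomic, non-preemptive). *)
Definition valid (n : nat) (s : R) (A : pattern) (S : schedule) : Prop :=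
  (forall p tau t, S p tau t ->
     (1 <= p <= n)%nat /\ alive A p t /\ pending A S s tau t) /\
  (forall p tau t tau' t', S p tau t -> S p tau' t' -> t <= t' ->
     (tau = tau' /\ t = t') \/ t + cost tau / s <= t' \/
     exists c, crash_at A p c /\ t < c <= t').

(* Work conservation: an alive processor is never idle while some task is
   pending (it is executing some started, not crashed, task). *)
Definition work_conserving (n : nat) (s : R) (A : pattern) (S : schedule)
  : Prop :=
  forall p t, (1 <= p <= n)%nat -> alive A p t ->
    (exists tau, pending A S s tau t) ->
    exists tau' t0, S p tau' t0 /\ t0 <= t /\ t < t0 + cost tau' / s /\
      forall c, crash_at A p c -> ~ (t0 < c /\ c <= t).

Definition agree_upto (A A' : pattern) (t : R) : Prop :=
  (forall tau, arr tau <= t -> (In tau (tasks A) <-> In tau (tasks A'))) /\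
  (forall e, pe_time e <= t -> (In e (pevents A) <-> In e (pevents A'))).

(* A deterministic online work-conserving algorithm for n processors with
   speedup s, facing tasks of cost in [lmin, lmax]: a map from patterns to
   schedules that is feasible and work conserving on every such pattern,
   and non-anticipating (its decisions up to time t depend only on the
   pattern up to time t). *)
Definition online_alg (n : nat) (s lmin lmax : R)
  (ALG : pattern -> schedule) : Prop :=
  (forall A, wf_pattern lmin lmax A ->
     valid n s A (ALG A) /\ work_conserving n s A (ALG A)) /\
  (forall A A' t, wf_pattern lmin lmax A -> wf_pattern lmin lmax A' ->
     agree_upto A A' t ->
     forall p tau t0, t0 <= t -> (ALG A p tau t0 <-> ALG A' p tau t0)).

(* x-pending-cost competitiveness.  OPT ranges over all offline feasible
   schedules with speedup 1; "<= x * inf_OPT + Delta" is expressed as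
   "<= x * C_t(S) + Delta for every such S". *)
Definition cost_competitive (n : nat) (s lmin lmax : R)
  (ALG : pattern -> schedule) (x : R) : Prop :=
  exists Delta, forall A, wf_pattern lmin lmax A -> forall t (S : schedule),
    valid n 1 A S ->
    pend_cost A (ALG A) s t <= x * pend_cost A S 1 t + Delta.

Definition task_competitive (n : nat) (s lmin lmax : R)
  (ALG : pattern -> schedule) (x : R) : Prop :=
  exists Delta, forall A, wf_pattern lmin lmax A -> forall t (S : schedule),
    valid n 1 A S ->
    pend_num A (ALG A) s t <= x * pend_num A S 1 t + Delta.

Definition competitive (n : nat) (s lmin lmax : R)
  (ALG : pattern -> schedule) : Prop :=
  exists x, cost_competitive n s lmin lmax ALG x \/
            task_competitive n s lmin lmax ALG x.

(* Main.v *)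
Require Import Defs.
From Stdlib Require Import Reals Lra Lia List ClassicalEpsilon Classical ZArith.
Import ListNotations.
Open Scope R_scope.

Definition cntP (l : list task) (P : task -> Prop) : R :=
  fold_right Rplus 0 (map (fun tau => if excluded_middle_informative (P tau) then 1 else 0) l).
Definition sumC (l : list task) (P : task -> Prop) : R :=
  fold_right Rplus 0 (map (fun tau => if excluded_middle_informative (P tau) then cost tau else 0) l).

Lemma cntP_cons a l P : cntP (a :: l) P = (if excluded_middle_informative (P a) then 1 else 0) + cntP l P.
Proof. reflexivity. Qed.

Lemma cntP_app l1 l2 P : cntP (l1 ++ l2) P = cntP l1 P + cntP l2 P.
Proof. induction l1; simpl; [unfold cntP; simpl; lra|]. rewrite !cntP_cons, IHl1. lra. Qed.

Lemma cntP_nonneg l P : 0 <= cntP l P.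
Proof. induction l; [unfold cntP; simpl; lra|]. rewrite cntP_cons. destruct excluded_middle_informative; lra. Qed.

Lemma cntP_le_len l P : cntP l P <= INR (length l).
Proof.
  induction l; [unfold cntP; simpl; lra|]. rewrite cntP_cons. simpl length. rewrite S_INR.
  destruct excluded_middle_informative; lra.
Qed.

Lemma cntP_mono l P Q : (forall t, In t l -> P t -> Q t) -> cntP l P <= cntP l Q.
Proof.
  induction l; intros H; [unfold cntP; simpl; lra|]. rewrite !cntP_cons.
  assert (IH := IHl (fun t Ht => H t (or_intror Ht))).
  destruct (excluded_middle_informative (P a)); destruct (excluded_middle_informative (Q a)); try lra.
  exfalso. apply n. apply H; simpl; auto.
Qed.

Lemma cntP_all l P : (forall t, In t l -> P t) -> cntP l P = INR (length l).
Proof.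
  induction l; intros H; [unfold cntP; simpl; lra|]. rewrite cntP_cons. simpl length. rewrite S_INR.
  rewrite IHl by (intros; apply H; simpl; auto).
  destruct excluded_middle_informative; [lra|]. exfalso. apply n. apply H. simpl; auto.
Qed.

Lemma cntP_none l P : (forall t, In t l -> ~ P t) -> cntP l P = 0.
Proof.
  induction l; intros H; [unfold cntP; simpl; lra|]. rewrite cntP_cons.
  rewrite IHl by (intros; apply H; simpl; auto).
  destruct excluded_middle_informative; [|lra]. exfalso. eapply H; [simpl; auto|]. auto.
Qed.

Lemma cntP_split l P Q1 Q2 : (forall t, In t l -> P t -> Q1 t \/ Q2 t) ->
  cntP l P <= cntP l Q1 + cntP l Q2.
Proof.
  induction l; intros H; [unfold cntP; simpl; lra|]. rewrite !cntP_cons.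
  assert (IH := IHl (fun t Ht => H t (or_intror Ht))).
  pose proof (cntP_nonneg l Q1). pose proof (cntP_nonneg l Q2).
  destruct (excluded_middle_informative (P a)); destruct (excluded_middle_informative (Q1 a));
  destruct (excluded_middle_informative (Q2 a)); try lra.
  exfalso. destruct (H a (or_introl eq_refl) p); auto.
Qed.

Lemma cntP_compl l P : cntP l P + cntP l (fun t => ~ P t) = INR (length l).
Proof.
  induction l; [unfold cntP; simpl; lra|]. rewrite !cntP_cons. simpl length. rewrite S_INR.
  destruct (excluded_middle_informative (P a)); destruct (excluded_middle_informative (~ P a)); try tauto; lra.
Qed.

Lemma cntP_le1 l Q : NoDup l -> (forall x y, In x l -> In y l -> Q x -> Q y -> x = y) -> cntP l Q <= 1.
Proof.
  induction l as [|a l IH]; intros ND H; [unfold cntP; simpl; lra|]. rewrite cntP_cons.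
  inversion ND; subst.
  destruct (excluded_middle_informative (Q a)).
  - rewrite cntP_none; [lra|]. intros t Ht Hq. assert (t = a) by (apply H; simpl; auto).
    subst. auto.
  - pose proof (IH H3 (fun x y Hx Hy => H x y (or_intror Hx) (or_intror Hy))). lra.
Qed.

Lemma cntP_cover {X : Type} (SL : list X) (Rel : X -> task -> Prop) l P :
  NoDup l -> (forall t, In t l -> P t -> exists k, In k SL /\ Rel k t) ->
  (forall k x y, In x l -> In y l -> Rel k x -> Rel k y -> x = y) ->
  cntP l P <= INR (length SL).
Proof.
  revert P. induction SL as [|k SL IH]; intros P ND Hc Hu.
  - rewrite cntP_none; [simpl; lra|]. intros t Ht Hp. destruct (Hc t Ht Hp) as [k [[] _]].
  - simpl length. rewrite S_INR.
    assert (H1 := cntP_split l P (fun t => P t /\ ~ Rel k t) (Rel k)).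
    assert (H2 : cntP l (fun t => P t /\ ~ Rel k t) <= INR (length SL)).
    { apply IH; auto. intros t Ht [Hp Hr]. destruct (Hc t Ht Hp) as [k' [[<-|Hk'] Hr']].
      - contradiction. - eauto. }
    assert (H3 : cntP l (Rel k) <= 1).
    { apply cntP_le1; auto. intros x y Hx Hy. apply Hu; auto. }
    assert (H4 : cntP l P <= cntP l (fun t => P t /\ ~ Rel k t) + cntP l (Rel k)).
    { apply H1. intros t _ Hp. destruct (classic (Rel k t)); auto. }
    lra.
Qed.

Lemma sumC_ge l P a : (forall t, In t l -> a <= cost t) -> a * cntP l P <= sumC l P.
Proof.
  induction l; intros H; [unfold cntP, sumC; simpl; lra|]. rewrite cntP_cons.
  assert (IH := IHl (fun t Ht => H t (or_intror Ht))).
  change (sumC (a0 :: l) P) with ((if excluded_middle_informative (P a0) then cost a0 else 0) + sumC l P).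
  pose proof (H a0 (or_introl eq_refl)).
  destruct excluded_middle_informative; nra.
Qed.

Lemma sumC_le l P b : (forall t, In t l -> cost t <= b) -> sumC l P <= b * cntP l P.
Proof.
  induction l; intros H; [unfold cntP, sumC; simpl; lra|]. rewrite cntP_cons.
  assert (IH := IHl (fun t Ht => H t (or_intror Ht))).
  change (sumC (a :: l) P) with ((if excluded_middle_informative (P a) then cost a else 0) + sumC l P).
  pose proof (H a (or_introl eq_refl)).
  destruct excluded_middle_informative; nra.
Qed.

Fixpoint first_true (f : nat -> bool) (k : nat) : option nat :=
  match k with
  | 0%nat => None
  | S k' => match first_true f k' with
            | Some j => Some j
            | None => if f k' then Some k' else None
            end
  end.

Lemma first_true_some f k j : first_true f k = Some j ->
  (j < k)%nat /\ f j = true /\ (forall i, (i < j)%nat -> f i = false).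
Proof.
  revert j. induction k as [|k IH]; simpl; intros j H; [discriminate|].
  destruct (first_true f k) eqn:E.
  - inversion H; subst. destruct (IH j eq_refl) as [H1 [H2 H3]]. repeat split; auto.
  - destruct (f k) eqn:F; [|discriminate]. inversion H; subst. repeat split; auto.
    intros i Hi. clear IH H.
    assert (Hn : forall k, first_true f k = None -> forall i, (i < k)%nat -> f i = false).
    { clear. induction k as [|k IH]; simpl; intros H i Hi; [lia|].
      destruct (first_true f k); [discriminate|]. destruct (f k) eqn:F; [discriminate|].
      destruct (Nat.eq_dec i k); [subst; auto|]. apply IH; auto. lia. }
    apply (Hn j E); auto.
Qed.

Lemma first_true_none f k : first_true f k = None -> forall i, (i < k)%nat -> f i = false.
Proof.
  induction k as [|k IH]; simpl; intros H i Hi; [lia|].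
  destruct (first_true f k); [discriminate|]. destruct (f k) eqn:F; [discriminate|].
  destruct (Nat.eq_dec i k); [subst; auto|]. apply IH; auto. lia.
Qed.


Section Main.
Variables lmin lmax s : R.
Variables g n : nat.
Hypothesis Hlmin : 0 < lmin.
Hypothesis Hlt : lmin < lmax.
Hypothesis Hs : 1 <= s.
Hypothesis Hn : (1 <= n)%nat.
Hypothesis HP1 : forall j, (j < g)%nat -> (INR j + 1) * lmin < (INR j * lmin + lmax) / s.
Hypothesis HP2 : lmax < (INR g * lmin + lmax) / s.

Definition mkmin (m : nat) (a : R) := Task (2*m)%nat a lmin.
Definition mkmax (m : nat) (a : R) := Task (2*m+1)%nat a lmax.
Definition Len (d : option nat) : R :=
  match d with Some j => (INR j + 1) * lmin | None => lmax end.
Fixpoint W (hr : list (option nat)) : R :=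
  match hr with [] => 0 | d :: hr' => W hr' + Len d + 1 end.
Fixpoint O (hr : list (option nat)) : nat :=
  match hr with [] => 0%nat | Some j :: hr' => (O hr' + S j)%nat | None :: hr' => O hr' end.
Fixpoint Bc (hr : list (option nat)) : nat :=
  match hr with [] => 0%nat | Some _ :: hr' => Bc hr' | None :: hr' => S (Bc hr') end.
Definition batch (d : option nat) (hr : list (option nat)) : list task :=
  match d with
  | Some j => map (fun m => mkmin m (W (d :: hr))) (seq (O hr + g) (S j))
  | None => [mkmax (S (Bc hr)) (W (d :: hr))]
  end.
Fixpoint Tk (hr : list (option nat)) : list task :=
  match hr with
  | [] => map (fun m => mkmin m 0) (seq 0 g) ++ [mkmax 0 0]
  | d :: hr' => Tk hr' ++ batch d hr'
  end.
Fixpoint Ev (hr : list (option nat)) : list pevent :=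
  match hr with
  | [] => map (fun p => PEv true p 0) (seq 2 (n-1))
  | d :: hr' => Ev hr' ++ [PEv true 1 (W hr' + Len d); PEv false 1 (W (d :: hr'))]
  end.
Definition build hr := Pattern (Tk hr) (Ev hr).

Lemma Len_pos d : 0 < Len d.
Proof. destruct d; simpl; [|lra]. pose proof (pos_INR n0). nra. Qed.

Lemma W_nonneg hr : 0 <= W hr.
Proof. induction hr; simpl; [lra|]. pose proof (Len_pos a). lra. Qed.

Lemma W_app hr1 hr2 : W hr2 <= W (hr1 ++ hr2).
Proof. induction hr1; simpl; [lra|]. pose proof (Len_pos a). lra. Qed.

Lemma W_cons_gt d hr : W hr + Len d < W (d :: hr).
Proof. simpl. lra. Qed.

Lemma tk_arr hr τ : In τ (Tk hr) -> 0 <= arr τ <= W hr.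
Proof.
  induction hr as [|d hr IH]; simpl; intros Hin.
  - apply in_app_or in Hin. destruct Hin as [Hin|Hin].
    + apply in_map_iff in Hin. destruct Hin as [m [<- _]]. simpl. lra.
    + destruct Hin as [<-|[]]. simpl. lra.
  - pose proof (W_nonneg hr). pose proof (Len_pos d).
    apply in_app_or in Hin. destruct Hin as [Hin|Hin].
    + specialize (IH Hin). lra.
    + destruct d; cbn [batch] in Hin.
      * apply in_map_iff in Hin. destruct Hin as [m [<- _]]. simpl in *. lra.
      * destruct Hin as [<-|[]]. simpl in *. lra.
Qed.

Lemma tk_kind hr τ : In τ (Tk hr) ->
  (exists m, tid τ = (2*m)%nat /\ cost τ = lmin /\ (m < O hr + g)%nat) \/
  (exists m, tid τ = (2*m+1)%nat /\ cost τ = lmax /\ (m <= Bc hr)%nat).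
Proof.
  induction hr as [|d hr IH]; simpl; intros Hin.
  - apply in_app_or in Hin. destruct Hin as [Hin|Hin].
    + apply in_map_iff in Hin. destruct Hin as [m [<- Hm]]. apply in_seq in Hm.
      left. exists m. simpl. repeat split; lia.
    + destruct Hin as [<-|[]]. right. exists 0%nat. simpl. repeat split; lia.
  - apply in_app_or in Hin. destruct Hin as [Hin|Hin].
    + destruct (IH Hin) as [[m [H1 [H2 H3]]]|[m [H1 [H2 H3]]]].
      * left. exists m. repeat split; auto. destruct d; simpl; lia.
      * right. exists m. repeat split; auto. destruct d; simpl; lia.
    + destruct d; cbn [batch] in Hin.
      * apply in_map_iff in Hin. destruct Hin as [m [<- Hm]]. apply in_seq in Hm.
        left. exists m. simpl. repeat split; lia.
      * destruct Hin as [<-|[]]. right. exists (S (Bc hr)). simpl. repeat split; lia.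
Qed.

Lemma tk_cost hr τ : In τ (Tk hr) -> cost τ = lmin \/ cost τ = lmax.
Proof. intros H. destruct (tk_kind hr τ H) as [[m [_ [H2 _]]]|[m [_ [H2 _]]]]; auto. Qed.

Lemma tk_nodup hr : NoDup (map tid (Tk hr)).
Proof.
  induction hr as [|d hr IH]; simpl.
  - rewrite map_app. apply NoDup_app.
    + rewrite map_map. simpl. apply NoDup_map_NoDup_ForallPairs.
      * intros x y _ _ H. lia.
      * apply seq_NoDup.
    + constructor; [intros []|constructor].
    + intros a Ha Hb. destruct Hb as [<-|[]]. apply in_map_iff in Ha.
      destruct Ha as [x [Hx Hin]]. apply in_map_iff in Hin. destruct Hin as [m [<- _]].
      simpl in Hx. lia.
  - rewrite map_app. apply NoDup_app; auto.
    + destruct d; cbn [batch].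
      * rewrite map_map. cbn [tid mkmin]. apply NoDup_map_NoDup_ForallPairs.
        -- intros x y _ _ H. lia.
        -- apply seq_NoDup.
      * constructor; [intros []|constructor].
    + intros a Ha Hb. apply in_map_iff in Ha. destruct Ha as [τ [<- Hτ]].
      destruct (tk_kind hr τ Hτ) as [[m [H1 [_ H3]]]|[m [H1 [_ H3]]]];
      destruct d; cbn [batch] in Hb.
      * rewrite map_map in Hb. apply in_map_iff in Hb. destruct Hb as [m' [Hm' Hin]].
        apply in_seq in Hin. simpl in Hm'. lia.
      * destruct Hb as [Hb|[]]. simpl in Hb. lia.
      * rewrite map_map in Hb. apply in_map_iff in Hb. destruct Hb as [m' [Hm' Hin]].
        simpl in Hm'. lia.
      * destruct Hb as [Hb|[]]. simpl in Hb. lia.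
Qed.

Lemma tid_inj hr τ τ' : In τ (Tk hr) -> In τ' (Tk hr) -> tid τ = tid τ' -> τ = τ'.
Proof.
  intros H1 H2 H3. pose proof (tk_nodup hr) as ND.
  revert H1 H2 ND. generalize (Tk hr). intros l. induction l as [|a l IH]; simpl; intros H1 H2 ND.
  - destruct H1.
  - inversion ND; subst. destruct H1 as [<-|H1]; destruct H2 as [<-|H2]; auto.
    + exfalso. apply H4. rewrite H3. apply in_map. auto.
    + exfalso. apply H4. rewrite <- H3. apply in_map. auto.
Qed.

Lemma tk_prefix hr1 hr2 τ : In τ (Tk hr2) -> In τ (Tk (hr1 ++ hr2)).
Proof. induction hr1; simpl; intros; auto. apply in_or_app. left. auto. Qed.

Lemma tk_ext hr1 hr2 τ : In τ (Tk (hr1 ++ hr2)) -> In τ (Tk hr2) \/ W hr2 < arr τ.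
Proof.
  induction hr1 as [|d hr1 IH]; simpl; intros Hin; auto.
  apply in_app_or in Hin. destruct Hin as [Hin|Hin]; auto.
  right. pose proof (W_app hr1 hr2). pose proof (Len_pos d).
  destruct d; cbn [batch] in Hin.
  - apply in_map_iff in Hin. destruct Hin as [m [<- _]]. simpl in *. lra.
  - destruct Hin as [<-|[]]. simpl in *. lra.
Qed.

Lemma tk_exists_min hr m : (m < O hr + g)%nat ->
  exists τ, In τ (Tk hr) /\ tid τ = (2*m)%nat.
Proof.
  induction hr as [|d hr IH]; simpl; intros Hm.
  - exists (mkmin m 0). split; auto. apply in_or_app. left. apply in_map_iff; eexists; split; [reflexivity|apply in_seq; lia].
  - destruct d as [j|].
    + destruct (Nat.lt_ge_cases m (O hr + g)) as [Hl|Hl].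
      * destruct (IH Hl) as [τ [H1 H2]]. exists τ. split; auto. apply in_or_app; auto.
      * exists (mkmin m (W (Some j :: hr))). split; auto. apply in_or_app. right.
        cbn [batch]. apply in_map_iff; eexists; split; [reflexivity|apply in_seq; lia].
    + destruct (IH Hm) as [τ [H1 H2]]. exists τ. split; auto. apply in_or_app; auto.
Qed.

Lemma tk_exists_max hr m : (m <= Bc hr)%nat ->
  exists τ, In τ (Tk hr) /\ tid τ = (2*m+1)%nat.
Proof.
  induction hr as [|d hr IH]; simpl; intros Hm.
  - exists (mkmax 0 0). split; [|simpl; lia]. apply in_or_app. right. left.
    replace m with 0%nat by lia. auto.
  - destruct d as [j|].
    + destruct (IH Hm) as [τ [H1 H2]]. exists τ. split; auto. apply in_or_app; auto.
    + destruct (Nat.le_gt_cases m (Bc hr)) as [Hl|Hl].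
      * destruct (IH Hl) as [τ [H1 H2]]. exists τ. split; auto. apply in_or_app; auto.
      * exists (mkmax m (W (None :: hr))). split; auto. apply in_or_app. right.
        simpl. left. f_equal. lia.
Qed.

Lemma ev_time hr e : In e (Ev hr) -> 0 <= pe_time e <= W hr.
Proof.
  induction hr as [|d hr IH]; simpl; intros Hin.
  - apply in_map_iff in Hin. destruct Hin as [p [<- _]]. simpl. lra.
  - pose proof (W_nonneg hr). pose proof (Len_pos d).
    apply in_app_or in Hin. destruct Hin as [Hin|Hin].
    + specialize (IH Hin). lra.
    + destruct Hin as [<-|[<-|[]]]; simpl; lra.
Qed.

Lemma ev_prefix hr1 hr2 e : In e (Ev hr2) -> In e (Ev (hr1 ++ hr2)).
Proof. induction hr1; simpl; intros; auto. apply in_or_app. left. auto. Qed.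

Lemma ev_ext hr1 hr2 e : In e (Ev (hr1 ++ hr2)) -> In e (Ev hr2) \/ W hr2 < pe_time e.
Proof.
  induction hr1 as [|d hr1 IH]; simpl; intros Hin; auto.
  apply in_app_or in Hin. destruct Hin as [Hin|Hin]; auto.
  right. pose proof (W_app hr1 hr2). pose proof (Len_pos d).
  destruct Hin as [<-|[<-|[]]]; simpl; lra.
Qed.

Lemma ev_unique hr e e' : In e (Ev hr) -> In e' (Ev hr) ->
  pe_proc e = pe_proc e' -> pe_time e = pe_time e' -> e = e'.
Proof.
  induction hr as [|d hr IH]; simpl; intros H1 H2 Hp Ht.
  - apply in_map_iff in H1. destruct H1 as [p [<- _]].
    apply in_map_iff in H2. destruct H2 as [p' [<- _]]. simpl in Hp. subst. auto.
  - pose proof (Len_pos d).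
    apply in_app_or in H1. apply in_app_or in H2.
    destruct H1 as [H1|H1]; destruct H2 as [H2|H2]; auto.
    + pose proof (ev_time hr e H1). destruct H2 as [<-|[<-|[]]]; simpl in Ht; lra.
    + pose proof (ev_time hr e' H2). destruct H1 as [<-|[<-|[]]]; simpl in Ht; lra.
    + destruct H1 as [<-|[<-|[]]]; destruct H2 as [<-|[<-|[]]]; simpl in Ht; auto; lra.
Qed.

Lemma wf_build hr : wf_pattern lmin lmax (build hr).
Proof.
  split; [|split; [|split]]; simpl.
  - apply tk_nodup.
  - intros τ Hτ. pose proof (tk_arr hr τ Hτ). destruct (tk_cost hr τ Hτ) as [->| ->]; lra.
  - intros e He. apply (ev_time hr e He).
  - intros e e' H1 H2 H3 H4. apply (ev_unique hr e e'); auto.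
Qed.


Lemma ev_base e : In e (Ev []) -> pe_crash e = true /\ pe_time e = 0 /\ (2 <= pe_proc e <= n)%nat.
Proof.
  simpl. intros H. apply in_map_iff in H. destruct H as [p [<- Hp]]. apply in_seq in Hp.
  simpl. repeat split; lia.
Qed.

Lemma restart_p1 hr p r : restart_at (build hr) p r -> p = 1%nat.
Proof.
  unfold restart_at. simpl. induction hr as [|d hr IH]; simpl; intros H.
  - apply ev_base in H. simpl in H. destruct H as [H _]. discriminate.
  - apply in_app_or in H. destruct H as [H|[H|[H|[]]]]; auto; inversion H; auto.
Qed.

Lemma crash_dead hr p : (2 <= p <= n)%nat -> crash_at (build hr) p 0.
Proof.
  intros Hp. unfold crash_at. simpl. rewrite <- (app_nil_r hr). apply (ev_prefix hr []). simpl.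
  apply in_map_iff. exists p. split; auto. apply in_seq. lia.
Qed.

Lemma dead_not_alive hr p t : (2 <= p <= n)%nat -> 0 <= t -> ~ alive (build hr) p t.
Proof.
  intros Hp Ht Ha. destruct (Ha 0 (crash_dead hr p Hp) Ht) as [r [Hr _]].
  apply restart_p1 in Hr. lia.
Qed.

Lemma alive_late hr t : W hr <= t -> alive (build hr) 1 t.
Proof.
  revert t; induction hr as [|d hr IH]; intros t Ht c Hc Hct; unfold crash_at in Hc; simpl in Hc.
  - apply ev_base in Hc. simpl in Hc. lia.
  - pose proof (Len_pos d). pose proof (W_nonneg hr).
    apply in_app_or in Hc. destruct Hc as [Hc|[Hc|[Hc|[]]]].
    + pose proof (ev_time hr _ Hc) as Ht'. simpl in Ht'.
      assert (Hw : W hr <= W hr) by lra.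
      destruct (IH (W hr) Hw c Hc ltac:(lra)) as [r [Hr1 Hr2]].
      exists r. split; [|simpl in Ht; lra].
      unfold restart_at in *. simpl. apply in_or_app. left. auto.
    + inversion Hc; subst. exists (W (d :: hr)). split.
      * unfold restart_at. simpl. apply in_or_app. right. right. left. auto.
      * simpl in *. lra.
    + discriminate.
Qed.

Lemma alive_win_char hr t : alive (build hr) 1 t -> 0 <= t -> t < W hr ->
  exists hr1 d hr2, hr = hr1 ++ d :: hr2 /\ W hr2 <= t /\ t < W hr2 + Len d.
Proof.
  induction hr as [|d hr IH]; intros Ha Ht0 Ht.
  - simpl in Ht. lra.
  - destruct (Rlt_le_dec t (W hr)) as [Hl|Hl].
    + assert (Ha' : alive (build hr) 1 t).
      { intros c Hc Hct. assert (Hc' : crash_at (build (d :: hr)) 1 c).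
        { unfold crash_at in *. simpl. apply in_or_app. left. auto. }
        destruct (Ha c Hc' Hct) as [r [Hr1 Hr2]]. exists r. split; auto.
        unfold restart_at in Hr1. simpl in Hr1. apply in_app_or in Hr1.
        destruct Hr1 as [Hr1|[Hr1|[Hr1|[]]]]; auto; inversion Hr1; subst.
        simpl in Hr2. pose proof (Len_pos d). lra. }
      destruct (IH Ha' Ht0 Hl) as [hr1 [d' [hr2 [E [H1 H2]]]]].
      exists (d :: hr1), d', hr2. rewrite E. auto.
    + destruct (Rlt_le_dec t (W hr + Len d)) as [Hl2|Hl2].
      * exists [], d, hr. auto.
      * exfalso. assert (Hc : crash_at (build (d :: hr)) 1 (W hr + Len d)).
        { unfold crash_at. simpl. apply in_or_app. right. left. auto. }
        destruct (Ha _ Hc Hl2) as [r [Hr1 Hr2]].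
        unfold restart_at in Hr1. simpl in Hr1. apply in_app_or in Hr1.
        destruct Hr1 as [Hr1|[Hr1|[Hr1|[]]]].
        -- pose proof (ev_time hr _ Hr1). simpl in *. pose proof (Len_pos d). lra.
        -- discriminate.
        -- inversion Hr1; subst. simpl in Ht. lra.
Qed.

Lemma crash_win hr1 d hr2 : crash_at (build (hr1 ++ d :: hr2)) 1 (W hr2 + Len d).
Proof.
  unfold crash_at. simpl. apply (ev_prefix hr1 (d :: hr2)). simpl.
  apply in_or_app. right. left. auto.
Qed.

Lemma crash_sep hr1 d hr2 c : crash_at (build (hr1 ++ d :: hr2)) 1 c ->
  In (PEv true 1 c) (Ev hr2) \/ c = W hr2 + Len d \/ W (d :: hr2) < c.
Proof.
  unfold crash_at. simpl. intros H. apply ev_ext in H. destruct H as [H|H]; auto.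
  simpl in H. apply in_app_or in H. destruct H as [H|[H|[H|[]]]]; auto.
  - inversion H; auto.
  - discriminate.
Qed.

Lemma crash_sep' hr1 d hr2 c : crash_at (build (hr1 ++ d :: hr2)) 1 c ->
  c <= W hr2 \/ c = W hr2 + Len d \/ W (d :: hr2) < c.
Proof.
  intros H. destruct (crash_sep hr1 d hr2 c H) as [H1|H1]; auto.
  left. apply (ev_time hr2 _ H1).
Qed.

Lemma alive_in_win hr1 d hr2 t : W hr2 <= t -> t < W hr2 + Len d ->
  alive (build (hr1 ++ d :: hr2)) 1 t.
Proof.
  intros H1 H2 c Hc Hct. destruct (crash_sep hr1 d hr2 c Hc) as [Hc'|[Hc'|Hc']].
  - pose proof (ev_time hr2 _ Hc') as Hcw. simpl in Hcw.
    assert (Hw : W hr2 <= W hr2) by lra.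
    destruct (alive_late hr2 (W hr2) Hw c Hc' ltac:(lra)) as [r [Hr1 Hr2]].
    exists r. split; [|lra]. unfold restart_at in *. simpl in *.
    replace (hr1 ++ d :: hr2) with ((hr1 ++ [d]) ++ hr2) by (rewrite <- app_assoc; auto).
    apply ev_prefix. auto.
  - lra.
  - simpl in Hc'. pose proof (Len_pos d). lra.
Qed.

Lemma agree_ext hr1 d hr2 t : t < W hr2 + Len d ->
  agree_upto (build hr2) (build (hr1 ++ d :: hr2)) t.
Proof.
  intros Ht. split; simpl.
  - intros τ Hτ. split; intros H.
    + apply tk_prefix with (hr1 := hr1 ++ [d]) in H. rewrite <- app_assoc in H. auto.
    + apply tk_ext in H. destruct H as [H|H]; [|simpl in H; lra].
      simpl in H. apply in_app_or in H. destruct H as [H|H]; auto.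
      exfalso. destruct d; cbn [batch] in H.
      * apply in_map_iff in H. destruct H as [m [<- _]]. simpl in *. lra.
      * destruct H as [<-|[]]. simpl in *. lra.
  - intros e He. split; intros H.
    + apply ev_prefix with (hr1 := hr1 ++ [d]) in H. rewrite <- app_assoc in H. auto.
    + apply ev_ext in H. destruct H as [H|H]; [|simpl in H; lra].
      simpl in H. apply in_app_or in H. destruct H as [H|[H|[H|[]]]]; auto;
      subst; simpl in *; lra.
Qed.




Definition slot (w : R) (i : nat) := w + INR i * lmin / s.
Definition Lmx (Sd : schedule) w i := exists τ, cost τ = lmax /\ Sd 1%nat τ (slot w i).
Definition dec (Sd : schedule) w :=
  first_true (fun i => if excluded_middle_informative (Lmx Sd w i) then true else false) g.

Definition WFact (d : option nat) (Sd : schedule) (w : R) : Prop :=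
  match d with
  | Some j => forall τ t0, w <= t0 -> t0 < w + (INR j + 1) * lmin -> Sd 1%nat τ t0 ->
      (exists i, (i < j)%nat /\ t0 = slot w i /\ cost τ = lmin) \/
      (t0 = slot w j /\ cost τ = lmax)
  | None => forall τ t0, w <= t0 -> t0 < w + lmax -> Sd 1%nat τ t0 ->
      (exists i, (i < g)%nat /\ t0 = slot w i /\ cost τ = lmin) \/ slot w g <= t0
  end.

Lemma slot_S w i : slot w (S i) = slot w i + lmin / s.
Proof. unfold slot. rewrite S_INR. field. lra. Qed.

Lemma lmin_s_pos : 0 < lmin / s.
Proof. apply Rdiv_lt_0_compat; lra. Qed.

Lemma slot_mono w i i' : (i < i')%nat -> slot w i + lmin / s <= slot w i'.
Proof.
  intros H. rewrite <- slot_S. unfold slot. apply Rplus_le_compat_l.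
  unfold Rdiv. apply Rmult_le_compat_r; [left; apply Rinv_0_lt_compat; lra|].
  apply Rmult_le_compat_r; [lra|]. apply le_INR. lia.
Qed.

Lemma slot_ge w i : w <= slot w i.
Proof. unfold slot. pose proof (pos_INR i). assert (0 <= INR i * lmin / s).
  { unfold Rdiv. apply Rmult_le_pos; [nra|left; apply Rinv_0_lt_compat; lra]. } lra. Qed.

Section OnePattern.
Variable P : pattern.
Variable Sd : schedule.
Variable w : R.
Hypothesis Hv : valid n s P Sd.
Hypothesis Hwc : work_conserving n s P Sd.
Hypothesis Halive : forall t, w <= t -> alive P 1 t.
Hypothesis Hnoc : forall c, crash_at P 1 c -> c < w.
Hypothesis Hprev : forall τ t0, Sd 1%nat τ t0 -> t0 < w -> exists c, crash_at P 1 c /\ t0 < c.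
Hypothesis Hprevmax : forall τ t0, Sd 1%nat τ t0 -> t0 < w -> cost τ = lmax ->
  exists c, crash_at P 1 c /\ t0 < c < t0 + cost τ / s.
Hypothesis Honly1 : forall p τ t0, Sd p τ t0 -> p = 1%nat.
Hypothesis Hcost : forall τ, In τ (tasks P) -> cost τ = lmin \/ cost τ = lmax.
Hypothesis Hmax : exists τ, In τ (tasks P) /\ cost τ = lmax /\ arr τ <= w.

Definition Slots i := forall τ t0, w <= t0 -> t0 < slot w i -> Sd 1%nat τ t0 ->
  exists i', (i' < i)%nat /\ t0 = slot w i' /\ cost τ = lmin.

Lemma cost_pos τ t0 : Sd 1%nat τ t0 -> 0 < cost τ / s.
Proof.
  intros H. destruct Hv as [Hv1 _]. destruct (Hv1 _ _ _ H) as [_ [_ [Hin _]]].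
  apply Rdiv_lt_0_compat; [|lra]. destruct (Hcost τ Hin) as [->| ->]; lra.
Qed.

Lemma start_at i : Slots i -> exists τ, Sd 1%nat τ (slot w i).
Proof.
  intros HS. set (t := slot w i). assert (Hwt : w <= t) by apply slot_ge.
  destruct Hmax as [τm [Hin [Hc Ha]]].
  assert (Hpend : pending P Sd s τm t).
  { split; [auto|split; [lra|]]. intros [p [t0 [H1 [H2 H3]]]].
    assert (p = 1%nat) by (eapply Honly1; eauto). subst p.
    destruct (Rlt_le_dec t0 w) as [Hl|Hl].
    - destruct (Hprevmax _ _ H1 Hl Hc) as [c [Hc1 Hc2]]. apply (H3 c Hc1). lra.
    - destruct (Rlt_le_dec t0 t) as [Hl2|Hl2].
      + destruct (HS _ _ Hl Hl2 H1) as [i' [_ [_ Hc']]]. lra.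
      + pose proof (cost_pos _ _ H1). lra. }
  destruct (Hwc 1%nat t ltac:(lia) (Halive t Hwt) (ex_intro _ τm Hpend))
    as [τ' [t0 [H1 [H2 [H3 H4]]]]].
  exists τ'. replace t with t0; auto.
  destruct (Rlt_le_dec t0 w) as [Hl|Hl].
  - destruct (Hprev _ _ H1 Hl) as [c [Hc1 Hc2]]. pose proof (Hnoc c Hc1).
    exfalso. apply (H4 c Hc1). lra.
  - destruct (Rlt_le_dec t0 t) as [Hl2|Hl2]; [|lra].
    destruct (HS _ _ Hl Hl2 H1) as [i' [Hi' [Ht0 Hc']]].
    pose proof (slot_mono w i' i Hi'). rewrite Hc' in H3. subst t. lra.
Qed.

Lemma chain i : (i <= g)%nat -> (forall i', (i' < i)%nat -> ~ Lmx Sd w i') -> Slots i.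
Proof.
  induction i as [|i IH]; intros Hi Hno.
  - intros τ t0 H1 H2. unfold slot in H2. simpl in H2. lra.
  - assert (HS : Slots i) by (apply IH; [lia|intros; apply Hno; lia]).
    destruct (start_at i HS) as [τ' Hτ'].
    assert (Hc' : cost τ' = lmin).
    { destruct Hv as [Hv1 _]. destruct (Hv1 _ _ _ Hτ') as [_ [_ [Hin _]]].
      destruct (Hcost τ' Hin) as [H|H]; auto. exfalso. apply (Hno i); [lia|]. exists τ'; auto. }
    intros τ t0 H1 H2 H3. rewrite slot_S in H2.
    destruct (Rlt_le_dec t0 (slot w i)) as [Hl|Hl].
    + destruct (HS _ _ H1 Hl H3) as [i' [Hi' Hr]]. exists i'. split; auto.
    + destruct Hv as [_ Hv2]. destruct (Hv2 _ _ _ _ _ Hτ' H3 Hl) as [[E1 E2]|[E|[c [Hc [Hc1 Hc2]]]]].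
      * subst. exists i. auto.
      * rewrite Hc' in E. lra.
      * pose proof (Hnoc c Hc). pose proof (slot_ge w i). lra.
Qed.

Lemma wfact_dec : WFact (dec Sd w) Sd w.
Proof.
  unfold WFact. destruct (dec Sd w) as [j|] eqn:E; unfold dec in E.
  - apply first_true_some in E. destruct E as [Hj [Hf Hlt']].
    destruct (excluded_middle_informative (Lmx Sd w j)) as [[τm [Hcm Hm]]|]; [|discriminate].
    assert (HS : Slots j).
    { apply chain; [lia|]. intros i' Hi' HL. specialize (Hlt' i' Hi').
      destruct (excluded_middle_informative (Lmx Sd w i')); [discriminate|contradiction]. }
    intros τ t0 H1 H2 H3.
    destruct (Rlt_le_dec t0 (slot w j)) as [Hl|Hl].
    + left. apply (HS _ _ H1 Hl H3).
    + destruct Hv as [_ Hv2]. destruct (Hv2 _ _ _ _ _ Hm H3 Hl) as [[E1 E2]|[E|[c [Hc [Hc1 Hc2]]]]].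
      * subst. right. auto.
      * exfalso. rewrite Hcm in E. specialize (HP1 j Hj). unfold slot in E.
        assert (w + (INR j + 1) * lmin < w + INR j * lmin / s + lmax / s).
        { replace (w + INR j * lmin / s + lmax / s) with (w + (INR j * lmin + lmax) / s)
            by (field; lra). lra. }
        lra.
      * pose proof (Hnoc c Hc). pose proof (slot_ge w j). lra.
  - pose proof (first_true_none _ _ E) as Hno.
    assert (HS : Slots g).
    { apply chain; [lia|]. intros i' Hi' HL. specialize (Hno i' Hi'). cbv beta in Hno.
      destruct (excluded_middle_informative (Lmx Sd w i')); [discriminate|contradiction]. }
    intros τ t0 H1 H2 H3.
    destruct (Rlt_le_dec t0 (slot w g)) as [Hl|Hl]; [left; apply (HS _ _ H1 Hl H3)|right; auto].
Qed.

End OnePattern.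

Lemma dec_lt Sd w j : dec Sd w = Some j -> (j < g)%nat.
Proof. unfold dec. intros H. apply first_true_some in H. tauto. Qed.




Lemma crash_lt hr c : crash_at (build hr) 1 c -> c < W hr.
Proof.
  unfold crash_at. simpl. induction hr as [|d hr IH]; simpl; intros H.
  - apply ev_base in H. simpl in H. lia.
  - pose proof (Len_pos d). apply in_app_or in H. destruct H as [H|[H|[H|[]]]].
    + specialize (IH H). lra.
    + inversion H. lra.
    + discriminate.
Qed.

Lemma tk_odd hr τ m : In τ (Tk hr) -> tid τ = (2*m+1)%nat -> cost τ = lmax.
Proof.
  intros H1 H2. destruct (tk_kind hr τ H1) as [[m' [E [_ _]]]|[m' [_ [C _]]]]; auto. lia.
Qed.

Lemma tk_even hr τ m : In τ (Tk hr) -> tid τ = (2*m)%nat -> cost τ = lmin /\ (m < O hr + g)%nat.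
Proof.
  intros H1 H2. destruct (tk_kind hr τ H1) as [[m' [E [C L]]]|[m' [E _]]]; [|lia].
  assert (m = m') by lia. subst. auto.
Qed.

Lemma wfact_transfer d w Sd Sd' : WFact d Sd w ->
  (forall τ t0, t0 < w + Len d -> Sd' 1%nat τ t0 -> Sd 1%nat τ t0) -> WFact d Sd' w.
Proof.
  destruct d as [j|]; simpl; intros H Ht τ t0 H1 H2 H3; apply H; auto.
Qed.

Lemma F1 d Sd w τ t0 : WFact d Sd w -> (forall j, d = Some j -> (j < g)%nat) ->
  Sd 1%nat τ t0 -> w <= t0 -> t0 < w + Len d -> cost τ = lmax ->
  w + Len d < t0 + lmax / s.
Proof.
  intros HW Hd H1 H2 H3 H4. destruct d as [j|]; simpl in *.
  - destruct (HW τ t0 H2 H3 H1) as [[i [_ [_ C]]]|[E _]]; [lra|].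
    specialize (HP1 j (Hd j eq_refl)). subst t0. unfold slot.
    replace (w + INR j * lmin / s + lmax / s) with (w + (INR j * lmin + lmax) / s) by (field; lra).
    lra.
  - destruct (HW τ t0 H2 H3 H1) as [[i [_ [_ C]]]|E]; [lra|].
    unfold slot in E.
    assert (w + lmax < w + INR g * lmin / s + lmax / s).
    { replace (w + INR g * lmin / s + lmax / s) with (w + (INR g * lmin + lmax) / s) by (field; lra).
      lra. }
    lra.
Qed.

Variable ALG : pattern -> schedule.
Hypothesis Honline : online_alg n s lmin lmax ALG.

Lemma alg_ok hr : valid n s (build hr) (ALG (build hr)) /\ work_conserving n s (build hr) (ALG (build hr)).
Proof. apply (proj1 Honline). apply wf_build. Qed.

Lemma alg_start hr p τ t0 : ALG (build hr) p τ t0 ->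
  p = 1%nat /\ 0 <= t0 /\ In τ (Tk hr) /\ alive (build hr) 1 t0.
Proof.
  intros H. destruct (alg_ok hr) as [[Hv1 _] _]. destruct (Hv1 _ _ _ H) as [Hp [Ha [Hin [Har _]]]].
  simpl in Hin. pose proof (tk_arr hr τ Hin).
  assert (p = 1%nat).
  { destruct (Nat.eq_dec p 1); auto. exfalso. apply (dead_not_alive hr p t0); [lia|lra|auto]. }
  subst. repeat split; auto; lra.
Qed.

Lemma start_loc hr τ t0 : ALG (build hr) 1%nat τ t0 -> W hr <= t0 \/
  exists hr1 d hr2, hr = hr1 ++ d :: hr2 /\ W hr2 <= t0 /\ t0 < W hr2 + Len d.
Proof.
  intros H. destruct (alg_start hr _ _ _ H) as [_ [H0 [_ Ha]]].
  destruct (Rlt_le_dec t0 (W hr)) as [Hl|Hl]; auto. right. apply alive_win_char; auto.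
Qed.

Definition Inv hr := forall hr1 d hr2, hr = hr1 ++ d :: hr2 -> WFact d (ALG (build hr)) (W hr2).
Definition Dok (hr : list (option nat)) := forall hr1 j hr2, hr = hr1 ++ Some j :: hr2 -> (j < g)%nat.

Lemma no_lmax_complete hr τ t0 : Inv hr -> Dok hr -> ALG (build hr) 1%nat τ t0 -> t0 < W hr ->
  cost τ = lmax -> exists c, crash_at (build hr) 1 c /\ t0 < c < t0 + cost τ / s.
Proof.
  intros HI HD H Hl Hc. destruct (start_loc hr τ t0 H) as [Hw|[hr1 [d [hr2 [E [H1 H2]]]]]]; [lra|].
  exists (W hr2 + Len d). split; [subst; apply crash_win|].
  rewrite Hc. split; auto.
  eapply F1; [apply (HI hr1 d hr2 E)| |exact H|exact H1|exact H2|exact Hc].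
  intros j Hj. subst d. eapply HD; eauto.
Qed.

Definition decP hr := dec (ALG (build hr)) (W hr).

Lemma wfact_cur hr : Inv hr -> Dok hr -> WFact (decP hr) (ALG (build hr)) (W hr).
Proof.
  intros HI HD. destruct (alg_ok hr) as [Hv Hwc]. apply wfact_dec with (P := build hr); auto.
  - intros t Ht. apply alive_late; auto.
  - intros c Hc. apply crash_lt; auto.
  - intros τ t0 H Hl. destruct (start_loc hr τ t0 H) as [Hw|[hr1 [d [hr2 [E [H1 H2]]]]]]; [lra|].
    exists (W hr2 + Len d). split; [subst; apply crash_win|lra].
  - intros τ t0 H Hl Hc. apply no_lmax_complete; auto.
  - intros p τ t0 H. apply (alg_start hr p τ t0 H).
  - intros τ Hin. apply (tk_cost hr τ Hin).
  - destruct (tk_exists_max hr (Bc hr) (le_n _)) as [τ [Hin Ht]]. exists τ. simpl.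
    split; auto. split; [apply (tk_odd hr τ (Bc hr)); auto|]. apply (tk_arr hr τ Hin).
Qed.

Lemma transfer_ext hr x : forall hr1 d hr2, hr = hr1 ++ d :: hr2 ->
  forall τ t0, t0 < W hr2 + Len d ->
  ALG (build (x :: hr)) 1%nat τ t0 -> ALG (build hr) 1%nat τ t0.
Proof.
  intros hr1 d hr2 E τ t0 Ht H.
  assert (Hlt2 : t0 < W hr + Len x).
  { subst. pose proof (W_app hr1 (d :: hr2)). simpl in *. pose proof (Len_pos x). lra. }
  destruct Honline as [_ Hna].
  apply (Hna (build hr) (build ([] ++ x :: hr)) t0 (wf_build _) (wf_build _)
    (agree_ext [] x hr t0 Hlt2) 1%nat τ t0 (Rle_refl _)). auto.
Qed.

Lemma transfer_cur hr x : forall τ t0, t0 < W hr + Len x ->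
  ALG (build (x :: hr)) 1%nat τ t0 -> ALG (build hr) 1%nat τ t0.
Proof.
  intros τ t0 Ht H. destruct Honline as [_ Hna].
  apply (Hna (build hr) (build ([] ++ x :: hr)) t0 (wf_build _) (wf_build _)
    (agree_ext [] x hr t0 Ht) 1%nat τ t0 (Rle_refl _)). auto.
Qed.

Fixpoint Hh (k : nat) : list (option nat) :=
  match k with 0%nat => [] | S k' => decP (Hh k') :: Hh k' end.

Lemma Hh_inv k : Inv (Hh k) /\ Dok (Hh k).
Proof.
  induction k as [|k [IHI IHD]].
  - split; intros hr1 d hr2 E; destruct hr1; discriminate.
  - simpl. split.
    + intros hr1 d hr2 E. destruct hr1 as [|y hr1]; simpl in E; inversion E; subst.
      * apply wfact_transfer with (Sd := ALG (build (Hh k))).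
        -- apply wfact_cur; auto.
        -- intros τ t0 Ht H. apply (transfer_cur (Hh k) (decP (Hh k))); auto.
      * apply wfact_transfer with (Sd := ALG (build (Hh k))).
        -- apply (IHI hr1 d hr2 H1).
        -- intros τ t0 Ht H. apply (transfer_ext (Hh k) (decP (Hh k)) hr1 d hr2 H1); auto.
    + intros hr1 j hr2 E. destruct hr1 as [|y hr1]; simpl in E; inversion E; subst.
      * apply (dec_lt _ _ _ H0).
      * eapply IHD; eauto.
Qed.


Definition WinS (hr2 : list (option nat)) (d : option nat) (τ : task) (t : R) : Prop :=
  match d with
  | Some j => exists i, (i <= j)%nat /\ tid τ = (2 * (O hr2 + i))%nat /\ t = W hr2 + INR i * lmin
  | None => tid τ = (2 * Bc hr2 + 1)%nat /\ t = W hr2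
  end.

Fixpoint OS (hr : list (option nat)) (τ : task) (t : R) : Prop :=
  match hr with
  | [] => False
  | d :: hr' => OS hr' τ t \/ WinS hr' d τ t
  end.

Definition Sopt (hr : list (option nat)) : schedule :=
  fun p τ t => p = 1%nat /\ In τ (Tk hr) /\ OS hr τ t.

Lemma OS_win hr τ t : OS hr τ t -> exists hr1 d hr2, hr = hr1 ++ d :: hr2 /\ WinS hr2 d τ t.
Proof.
  induction hr as [|d hr IH]; simpl; [tauto|]. intros [H|H].
  - destruct (IH H) as [hr1 [d' [hr2 [E H']]]]. exists (d :: hr1), d', hr2. rewrite E. auto.
  - exists [], d, hr. auto.
Qed.

Lemma OS_intro hr1 d hr2 τ t : WinS hr2 d τ t -> OS (hr1 ++ d :: hr2) τ t.
Proof. induction hr1; simpl; auto. Qed.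

Lemma WinS_time hr2 d τ t : Dok (d :: hr2) -> WinS hr2 d τ t ->
  W hr2 <= t /\
  ((exists m, tid τ = (2*m)%nat /\ t + lmin <= W hr2 + Len d) \/
   (exists m, tid τ = (2*m+1)%nat /\ t + lmax <= W hr2 + Len d)).
Proof.
  intros HD. destruct d as [j|]; simpl.
  - intros [i [Hi [Ht ->]]]. pose proof (pos_INR i). split; [nra|].
    left. exists (O hr2 + i)%nat. split; auto.
    assert (INR i <= INR j) by (apply le_INR; auto). nra.
  - intros [Ht ->]. split; [lra|]. right. exists (Bc hr2). split; auto. lra.
Qed.

Lemma Dok_suffix hr1 hr2 : Dok (hr1 ++ hr2) -> Dok hr2.
Proof. intros H a j b E. apply (H (hr1 ++ a) j b). rewrite E, app_assoc. auto. Qed.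

Lemma OS_time hr τ t : Dok hr -> OS hr τ t ->
  exists hr1 d hr2, hr = hr1 ++ d :: hr2 /\ W hr2 <= t /\
  ((exists m, tid τ = (2*m)%nat /\ t + lmin <= W hr2 + Len d) \/
   (exists m, tid τ = (2*m+1)%nat /\ t + lmax <= W hr2 + Len d)).
Proof.
  intros HD H. destruct (OS_win hr τ t H) as [hr1 [d [hr2 [E HW]]]].
  exists hr1, d, hr2. split; auto. apply WinS_time; auto. subst. apply (Dok_suffix hr1). auto.
Qed.

Lemma OS_lt hr τ t : Dok hr -> OS hr τ t -> t < W hr.
Proof.
  intros HD H. destruct (OS_time hr τ t HD H) as [hr1 [d [hr2 [E [H1 H2]]]]].
  pose proof (W_app hr1 (d :: hr2)) as HW. rewrite <- E in HW. simpl in HW. pose proof (Len_pos d).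
  destruct H2 as [[m [_ H2]]|[m [_ H2]]]; lra.
Qed.

Lemma OS_index hr τ t : OS hr τ t ->
  (exists m, tid τ = (2*m)%nat /\ (m < O hr)%nat) \/ (exists m, tid τ = (2*m+1)%nat /\ (m < Bc hr)%nat).
Proof.
  induction hr as [|d hr IH]; simpl; [tauto|]. intros [H|H].
  - destruct (IH H) as [[m [H1 H2]]|[m [H1 H2]]]; [left|right]; exists m; split; auto;
    destruct d; simpl; lia.
  - destruct d as [j|]; simpl in H.
    + destruct H as [i [Hi [Ht _]]]. left. exists (O hr + i)%nat. split; auto. lia.
    + destruct H as [Ht _]. right. exists (Bc hr). split; auto.
Qed.

Lemma OS_unique hr τ τ' t t' : OS hr τ t -> OS hr τ' t' -> tid τ = tid τ' -> t = t'.
Proof.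
  induction hr as [|d hr IH]; simpl; [tauto|]. intros [H|H] [H'|H'] E; auto.
  - destruct (OS_index hr τ t H) as [[m [H1 H2]]|[m [H1 H2]]]; destruct d as [j|]; simpl in H';
    [destruct H' as [i [_ [H3 _]]]|destruct H' as [H3 _]|destruct H' as [i [_ [H3 _]]]|destruct H' as [H3 _]]; lia.
  - destruct (OS_index hr τ' t' H') as [[m [H1 H2]]|[m [H1 H2]]]; destruct d as [j|]; simpl in H;
    [destruct H as [i [_ [H3 _]]]|destruct H as [H3 _]|destruct H as [i [_ [H3 _]]]|destruct H as [H3 _]]; lia.
  - destruct d as [j|]; simpl in H, H'.
    + destruct H as [i [_ [H1 ->]]]. destruct H' as [i' [_ [H1' ->]]].
      assert (i = i') by lia. subst. auto.
    + destruct H as [_ ->]. destruct H' as [_ ->]. auto.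
Qed.

Lemma OS_sep hr τ τ' t t' : Dok hr -> OS hr τ t -> OS hr τ' t' -> t <= t' ->
  (tid τ = tid τ' /\ t = t') \/
  (exists m, tid τ = (2*m)%nat /\ t + lmin <= t') \/
  (exists m, tid τ = (2*m+1)%nat /\ t + lmax <= t').
Proof.
  induction hr as [|d hr IH]; simpl; [tauto|]. intros HD [H|H] [H'|H'] Hle.
  - apply IH; auto. apply (Dok_suffix [d]). auto.
  - assert (HD' : Dok hr) by (apply (Dok_suffix [d]); auto).
    destruct (OS_time hr τ t HD' H) as [hr1 [d' [hr2 [E [H1 H2]]]]].
    assert (W (d' :: hr2) <= W hr) by (rewrite E; apply W_app). simpl in H0.
    assert (W hr <= t').
    { destruct d as [j|]; simpl in H'.
      - destruct H' as [i [_ [_ ->]]]. pose proof (pos_INR i). nra.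
      - destruct H' as [_ ->]. lra. }
    right. destruct H2 as [[m [Hm H2]]|[m [Hm H2]]]; [left|right]; exists m; split; auto; lra.
  - exfalso. assert (HD' : Dok hr) by (apply (Dok_suffix [d]); auto).
    pose proof (OS_lt hr τ' t' HD' H').
    assert (W hr <= t).
    { destruct d as [j|]; simpl in H.
      - destruct H as [i [_ [_ ->]]]. pose proof (pos_INR i). nra.
      - destruct H as [_ ->]. lra. }
    lra.
  - destruct d as [j|]; simpl in H, H'.
    + destruct H as [i [_ [H1 ->]]]. destruct H' as [i' [_ [H1' ->]]].
      destruct (Nat.lt_trichotomy i i') as [Hl|[Hl|Hl]].
      * right. left. exists (O hr + i)%nat. split; auto.
        assert (INR i + 1 <= INR i') by (rewrite <- S_INR; apply le_INR; lia). nra.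
      * subst. left. split; [lia|auto].
      * exfalso. assert (INR i' + 1 <= INR i) by (rewrite <- S_INR; apply le_INR; lia). nra.
    + destruct H as [H1 ->]. destruct H' as [H1' ->]. left. split; [lia|auto].
Qed.

Lemma tid_cost hr τ : In τ (Tk hr) ->
  ((exists m, tid τ = (2*m)%nat) -> cost τ = lmin) /\ ((exists m, tid τ = (2*m+1)%nat) -> cost τ = lmax).
Proof.
  intros H. split; intros [m Hm]; [apply (tk_even hr τ m H Hm)|apply (tk_odd hr τ m H Hm)].
Qed.

Lemma arr_by_window hr hr1 d hr2 τ t : hr = hr1 ++ d :: hr2 -> Dok hr -> In τ (Tk hr) ->
  WinS hr2 d τ t -> arr τ <= W hr2.
Proof.
  intros E HD Hin HW. destruct d as [j|]; simpl in HW.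
  - destruct HW as [i [Hi [Ht _]]]. assert (Hj : (j < g)%nat) by (eapply HD; eauto).
    destruct (tk_exists_min hr2 (O hr2 + i) ltac:(lia)) as [τ' [Hin' Ht']].
    assert (τ = τ').
    { apply (tid_inj hr); auto; [|lia]. subst hr. replace (hr1 ++ Some j :: hr2) with ((hr1 ++ [Some j]) ++ hr2) by (rewrite <- app_assoc; auto). apply tk_prefix. auto. }
    subst. apply (tk_arr hr2). auto.
  - destruct HW as [Ht _].
    destruct (tk_exists_max hr2 (Bc hr2) (le_n _)) as [τ' [Hin' Ht']].
    assert (τ = τ').
    { apply (tid_inj hr); auto; [|lia]. subst hr. replace (hr1 ++ None :: hr2) with ((hr1 ++ [None]) ++ hr2) by (rewrite <- app_assoc; auto). apply tk_prefix. auto. }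
    subst. apply (tk_arr hr2). auto.
Qed.

Lemma Rdiv1 x : x / 1 = x.
Proof. field. Qed.

Lemma opt_valid hr : Dok hr -> valid n 1 (build hr) (Sopt hr).
Proof.
  intros HD. split.
  - intros p τ t [Hp [Hin HO]]. subst p. split; [lia|].
    destruct (OS_win hr τ t HO) as [hr1 [d [hr2 [E HW]]]].
    assert (HD2 : Dok (d :: hr2)) by (subst; apply (Dok_suffix hr1); auto).
    destruct (WinS_time hr2 d τ t HD2 HW) as [H1 H2].
    assert (Ht : t < W hr2 + Len d) by (destruct H2 as [[m [_ H2]]|[m [_ H2]]]; lra).
    split; [subst; apply alive_in_win; auto|].
    split; [exact Hin|]. split; [pose proof (arr_by_window hr hr1 d hr2 τ t E HD Hin HW); lra|].
    intros [p [t0 [[Hp [_ H0]] [H3 _]]]]. subst p.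
    pose proof (OS_unique hr τ τ t0 t H0 HO eq_refl). subst t0.
    rewrite Rdiv1 in H3. destruct (tk_cost hr τ Hin); lra.
  - intros p τ t τ' t' [Hp [Hin HO]] [Hp' [Hin' HO']] Hle. subst.
    destruct (OS_sep hr τ τ' t t' HD HO HO' Hle) as [[E1 E2]|[[m [Hm H]]|[m [Hm H]]]].
    + left. split; auto. apply (tid_inj hr); auto.
    + right. left. rewrite Rdiv1. rewrite (proj1 (tk_even hr τ m Hin Hm)). auto.
    + right. left. rewrite Rdiv1. rewrite (tk_odd hr τ m Hin Hm). auto.
Qed.

Lemma OS_cover_min hr m : (m < O hr)%nat ->
  exists hr1 j hr2 i, hr = hr1 ++ Some j :: hr2 /\ (i <= j)%nat /\ m = (O hr2 + i)%nat.
Proof.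
  induction hr as [|d hr IH]; simpl; intros Hm; [lia|].
  destruct d as [j|].
  - destruct (Nat.lt_ge_cases m (O hr)) as [Hl|Hl].
    + destruct (IH Hl) as [hr1 [j' [hr2 [i [E [H1 H2]]]]]]. exists (Some j :: hr1), j', hr2, i.
      rewrite E. auto.
    + exists [], j, hr, (m - O hr)%nat. simpl. repeat split; lia.
  - destruct (IH Hm) as [hr1 [j' [hr2 [i [E [H1 H2]]]]]]. exists (None :: hr1), j', hr2, i.
    rewrite E. auto.
Qed.

Lemma OS_cover_max hr m : (m < Bc hr)%nat ->
  exists hr1 hr2, hr = hr1 ++ None :: hr2 /\ m = Bc hr2.
Proof.
  induction hr as [|d hr IH]; simpl; intros Hm; [lia|].
  destruct d as [j|].
  - destruct (IH Hm) as [hr1 [hr2 [E H]]]. exists (Some j :: hr1), hr2. rewrite E. auto.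
  - destruct (Nat.lt_ge_cases m (Bc hr)) as [Hl|Hl].
    + destruct (IH Hl) as [hr1 [hr2 [E H]]]. exists (None :: hr1), hr2. rewrite E. auto.
    + exists [], hr. simpl. split; auto. lia.
Qed.

Lemma opt_done hr hr1 d hr2 τ t : hr = hr1 ++ d :: hr2 -> Dok hr -> In τ (Tk hr) ->
  WinS hr2 d τ t -> completed (build hr) (Sopt hr) 1 τ (W hr).
Proof.
  intros E HD Hin HW. exists 1%nat, t. split; [split; [auto|split; auto]; subst; apply OS_intro; auto|].
  assert (HD2 : Dok (d :: hr2)) by (subst; apply (Dok_suffix hr1); auto).
  destruct (WinS_time hr2 d τ t HD2 HW) as [H1 H2].
  rewrite Rdiv1.
  assert (Hend : t + cost τ <= W hr2 + Len d).
  { destruct H2 as [[m [Hm H2]]|[m [Hm H2]]];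
    [rewrite (proj1 (tk_even hr τ m Hin Hm))|rewrite (tk_odd hr τ m Hin Hm)]; auto. }
  assert (W (d :: hr2) <= W hr) by (rewrite E; apply W_app). simpl in H.
  split; [lra|].
  intros c Hc [Hc1 Hc2]. rewrite E in Hc. destruct (crash_sep' hr1 d hr2 c Hc) as [H3|[H3|H3]];
  simpl in *; lra.
Qed.

Lemma opt_pending hr : Dok hr -> pend_num (build hr) (Sopt hr) 1 (W hr) <= INR g + 1.
Proof.
  intros HD.
  change (pend_num (build hr) (Sopt hr) 1 (W hr)) with
    (cntP (Tk hr) (fun τ => pending (build hr) (Sopt hr) 1 τ (W hr))).
  set (M := map (fun m => (2*m)%nat) (seq (O hr) g) ++ [(2 * Bc hr + 1)%nat]).
  assert (HM : INR (length M) = INR g + 1).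
  { unfold M. rewrite length_app, length_map, length_seq. simpl. rewrite plus_INR. simpl. lra. }
  rewrite <- HM. apply (cntP_cover M (fun m τ => tid τ = m)).
  - apply (NoDup_map_inv tid). apply tk_nodup.
  - intros τ Hin [_ [_ Hnc]]. exists (tid τ). split; auto.
    destruct (tk_kind hr τ Hin) as [[m [H1 [H2 H3]]]|[m [H1 [H2 H3]]]].
    + destruct (Nat.lt_ge_cases m (O hr)) as [Hl|Hl].
      * exfalso. apply Hnc. destruct (OS_cover_min hr m Hl) as [hr1 [j [hr2 [i [E [Hi Hm]]]]]].
        apply (opt_done hr hr1 (Some j) hr2 τ (W hr2 + INR i * lmin) E HD Hin).
        simpl. exists i. split; auto. split; auto. lia.
      * unfold M. apply in_or_app. left. rewrite H1. apply in_map_iff. exists m.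
        split; auto. apply in_seq. lia.
    + destruct (Nat.lt_ge_cases m (Bc hr)) as [Hl|Hl].
      * exfalso. apply Hnc. destruct (OS_cover_max hr m Hl) as [hr1 [hr2 [E Hm]]].
        apply (opt_done hr hr1 None hr2 τ (W hr2) E HD Hin).
        simpl. split; auto. lia.
      * unfold M. apply in_or_app. right. left. rewrite H1. f_equal. f_equal. lia.
  - intros k x y Hx Hy Ex Ey. apply (tid_inj hr); auto. congruence.
Qed.


Lemma cnt_lmax hr : cntP (Tk hr) (fun τ => cost τ = lmax) = INR (S (Bc hr)).
Proof.
  induction hr as [|d hr IH]; simpl Tk.
  - rewrite cntP_app. rewrite cntP_none.
    + rewrite cntP_all; [simpl; lra|]. intros t [<-|[]]. reflexivity.
    + intros t Ht. apply in_map_iff in Ht. destruct Ht as [m [<- _]]. simpl. lra.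
  - rewrite cntP_app, IH. destruct d as [j|]; cbn [batch Bc].
    + rewrite cntP_none; [lra|]. intros t Ht. apply in_map_iff in Ht. destruct Ht as [m [<- _]]. simpl. lra.
    + rewrite cntP_all; [simpl length; rewrite (S_INR (S (Bc hr))); simpl; lra|].
      intros t [<-|[]]. reflexivity.
Qed.

Lemma alg_slot_unique hr x y t : ALG (build hr) 1%nat x t -> ALG (build hr) 1%nat y t -> x = y.
Proof.
  intros H1 H2. destruct (alg_ok hr) as [[Hv1 Hv2] _].
  destruct (Hv2 _ _ _ _ _ H1 H2 (Rle_refl t)) as [[E _]|[E|[c [_ [Hc1 Hc2]]]]]; auto; [|lra].
  destruct (Hv1 _ _ _ H1) as [_ [_ [Hin _]]]. simpl in Hin.
  exfalso. assert (0 < cost x / s).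
  { apply Rdiv_lt_0_compat; [|lra]. destruct (tk_cost hr x Hin) as [->| ->]; lra. }
  lra.
Qed.

Lemma alg_lmax_pending hr : Inv hr -> Dok hr ->
  INR (S (Bc hr)) <= pend_num (build hr) (ALG (build hr)) s (W hr).
Proof.
  intros HI HD. rewrite <- cnt_lmax.
  change (pend_num (build hr) (ALG (build hr)) s (W hr)) with
    (cntP (Tk hr) (fun τ => pending (build hr) (ALG (build hr)) s τ (W hr))).
  apply cntP_mono. intros τ Hin Hc. split; [exact Hin|]. split; [apply (tk_arr hr τ Hin)|].
  intros [p [t0 [H1 [H2 H3]]]].
  destruct (alg_start hr p τ t0 H1) as [-> _].
  assert (0 < cost τ / s) by (rewrite Hc; apply Rdiv_lt_0_compat; lra).
  destruct (no_lmax_complete hr τ t0 HI HD H1 ltac:(lra) Hc) as [c [Hc1 Hc2]].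
  apply (H3 c Hc1). lra.
Qed.

Fixpoint NT (hr1 hr0 : list (option nat)) : list task :=
  match hr1 with [] => [] | d :: hr1' => NT hr1' hr0 ++ batch d (hr1' ++ hr0) end.

Lemma Tk_app hr1 hr0 : Tk (hr1 ++ hr0) = Tk hr0 ++ NT hr1 hr0.
Proof.
  induction hr1 as [|d hr1 IH]; simpl; [rewrite app_nil_r; auto|]. rewrite IH, app_assoc. auto.
Qed.

Definition AllSome (hr : list (option nat)) := forall d, In d hr -> exists j, d = Some j.

Fixpoint sumJ (hr : list (option nat)) : nat :=
  match hr with [] => 0%nat | Some j :: hr' => (j + sumJ hr')%nat | None :: hr' => sumJ hr' end.

Lemma NT_len hr1 hr0 : AllSome hr1 -> length (NT hr1 hr0) = (sumJ hr1 + length hr1)%nat.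
Proof.
  induction hr1 as [|d hr1 IH]; simpl; intros H; auto.
  destruct (H d (or_introl eq_refl)) as [j ->]. rewrite length_app, IH.
  - cbn [batch]. rewrite length_map, length_seq. simpl. lia.
  - intros x Hx. apply H. simpl. auto.
Qed.

Lemma NT_prop hr1 hr0 τ : AllSome hr1 -> In τ (NT hr1 hr0) -> W hr0 < arr τ /\ cost τ = lmin.
Proof.
  induction hr1 as [|d hr1 IH]; simpl; intros H Hin; [tauto|].
  apply in_app_or in Hin. destruct Hin as [Hin|Hin].
  - apply IH; auto. intros x Hx. apply H. simpl. auto.
  - destruct (H d (or_introl eq_refl)) as [j ->]. cbn [batch] in Hin.
    apply in_map_iff in Hin. destruct Hin as [m [<- _]]. simpl.
    pose proof (W_app hr1 hr0). pose proof (Len_pos (Some j)). simpl in *. split; lra.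
Qed.

Fixpoint SLp (hr1 hr0 : list (option nat)) : list R :=
  match hr1 with
  | [] => []
  | Some j :: hr1' => map (fun i => slot (W (hr1' ++ hr0)) i) (seq 0 j) ++ SLp hr1' hr0
  | None :: hr1' => SLp hr1' hr0
  end.

Lemma SLp_len hr1 hr0 : length (SLp hr1 hr0) = sumJ hr1.
Proof.
  induction hr1 as [|d hr1 IH]; simpl; auto. destruct d as [j|]; auto.
  rewrite length_app, length_map, length_seq, IH. auto.
Qed.

Lemma SLp_in a j b hr0 i : (i < j)%nat -> In (slot (W (b ++ hr0)) i) (SLp (a ++ Some j :: b) hr0).
Proof.
  intros Hi. induction a as [|d a IH]; simpl.
  - apply in_or_app. left. apply in_map_iff. exists i. split; auto. apply in_seq. lia.
  - destruct d as [j'|]; auto. apply in_or_app. right. auto.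
Qed.

Lemma alg_run_pending hr1 hr0 : Inv (hr1 ++ hr0) -> AllSome hr1 ->
  INR (length hr1) <= pend_num (build (hr1 ++ hr0)) (ALG (build (hr1 ++ hr0))) s (W (hr1 ++ hr0)).
Proof.
  intros HI HA. set (hr := hr1 ++ hr0). set (T := W hr). set (Rg := ALG (build hr)).
  change (pend_num (build hr) Rg s T) with (cntP (Tk hr) (fun τ => pending (build hr) Rg s τ T)).
  assert (ND : NoDup (Tk hr)) by (apply (NoDup_map_inv tid); apply tk_nodup).
  unfold hr in ND |- *. rewrite Tk_app in ND |- *. rewrite cntP_app.
  pose proof (cntP_nonneg (Tk hr0) (fun τ => pending (build hr) Rg s τ T)).
  apply NoDup_app_remove_l in ND.
  pose proof (cntP_compl (NT hr1 hr0) (fun τ => pending (build hr) Rg s τ T)) as Hc.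
  rewrite NT_len in Hc by auto.
  assert (Hb : cntP (NT hr1 hr0) (fun τ => ~ pending (build hr) Rg s τ T) <= INR (sumJ hr1)).
  { rewrite <- (SLp_len hr1 hr0). apply (cntP_cover (SLp hr1 hr0) (fun t τ => Rg 1%nat τ t)); auto.
    - intros τ Hin Hnp.
      assert (Hin2 : In τ (Tk hr)) by (unfold hr; rewrite Tk_app; apply in_or_app; auto).
      destruct (NT_prop hr1 hr0 τ HA Hin) as [Harr Hcost].
      assert (Hcomp : completed (build hr) Rg s τ T).
      { apply NNPP. intros Hnc. apply Hnp. split; [exact Hin2|]. split; [apply (tk_arr hr τ Hin2)|auto]. }
      destruct Hcomp as [p [t0 [H1 [H2 _]]]].
      destruct (alg_start hr p τ t0 H1) as [-> _].
      assert (Ht0 : t0 < T) by (rewrite Hcost in H2; pose proof lmin_s_pos; lra).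
      destruct (alg_ok hr) as [[Hv1 _] _]. destruct (Hv1 _ _ _ H1) as [_ [_ [_ [Har _]]]].
      destruct (start_loc hr τ t0 H1) as [Hw|[a [d [b [E [Hb1 Hb2]]]]]]; [unfold T in Ht0; lra|].
      unfold hr in E. apply app_eq_app in E. destruct E as [l [[E1 E2]|[E1 E2]]].
      + destruct l as [|x l].
        * simpl in E2. subst hr0. simpl in Harr. lra.
        * simpl in E2. inversion E2; subst x b.
          destruct (HA d) as [j ->]; [rewrite E1; apply in_or_app; right; simpl; auto|].
          assert (Ea : hr1 ++ hr0 = a ++ Some j :: l ++ hr0) by (rewrite E1, <- app_assoc; auto).
          specialize (HI a (Some j) (l ++ hr0) Ea). simpl in HI.
          destruct (HI τ t0 Hb1 Hb2 H1) as [[i [Hi [Ht Hc']]]|[Ht Hc']].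
          -- exists (slot (W (l ++ hr0)) i). split; [rewrite E1; apply SLp_in; auto|].
             rewrite <- Ht. auto.
          -- exfalso. lra.
      + exfalso. assert (W (d :: b) <= W hr0) by (rewrite E2; apply W_app). simpl in H0. lra.
    - intros k x y Hx Hy H1 H2. apply (alg_slot_unique hr x y k); auto. }
  rewrite plus_INR in Hc. unfold Rg, T, hr in *. lra.
Qed.


Fixpoint trail (hr : list (option nat)) : nat :=
  match hr with Some _ :: hr' => S (trail hr') | _ => 0%nat end.

Lemma trail_split hr : exists hr1 hr0, hr = hr1 ++ hr0 /\ AllSome hr1 /\ length hr1 = trail hr.
Proof.
  induction hr as [|d hr IH].
  - exists [], []. split; auto. split; auto. intros x [].
  - destruct d as [j|].
    + destruct IH as [hr1 [hr0 [E [HA HL]]]]. exists (Some j :: hr1), hr0. simpl. subst hr.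
      split; auto. split; [|lia]. intros x [<-|Hx]; eauto.
    + exists [], (None :: hr). simpl. split; auto. split; auto. intros x [].
Qed.

Lemma lex_claim X K : (exists K', (X <= Bc (Hh K'))%nat \/ (X <= trail (Hh K'))%nat) \/
  (K <= Bc (Hh K) * X + trail (Hh K))%nat.
Proof.
  induction K as [|K [IH|IH]]; [right; simpl; lia|left; auto|].
  destruct (Nat.le_gt_cases X (Bc (Hh K))) as [H1|H1]; [left; eauto|].
  destruct (Nat.le_gt_cases X (trail (Hh K))) as [H2|H2]; [left; eauto|].
  right. simpl. destruct (decP (Hh K)); simpl; nia.
Qed.

Lemma lex X : (1 <= X)%nat -> exists K, (X <= S (Bc (Hh K)))%nat \/ (X <= trail (Hh K))%nat.
Proof.
  intros HX. destruct (lex_claim X (X * X)) as [[K [H|H]]|H]; [exists K; left; lia|exists K; right; lia|].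
  destruct (Nat.le_gt_cases X (Bc (Hh (X*X)))) as [H1|H1]; [exists (X*X)%nat; left; lia|].
  destruct (Nat.le_gt_cases X (trail (Hh (X*X)))) as [H2|H2]; [exists (X*X)%nat; right; lia|].
  exfalso. nia.
Qed.

Lemma nat_above r : exists X : nat, r < INR X.
Proof.
  destruct (Rle_lt_dec r 0) as [H|H]; [exists 1%nat; simpl; lra|].
  destruct (archimed r) as [H1 _]. exists (Z.to_nat (up r)).
  rewrite INR_IZR_INZ. rewrite Z2Nat.id; [lra|].
  apply le_IZR. lra.
Qed.

Lemma alg_big X : (1 <= X)%nat -> exists hr, Inv hr /\ Dok hr /\
  INR X <= pend_num (build hr) (ALG (build hr)) s (W hr).
Proof.
  intros HX. destruct (lex X HX) as [K HK]. destruct (Hh_inv K) as [HI HD].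
  exists (Hh K). split; auto. split; auto. destruct HK as [HK|HK].
  - eapply Rle_trans; [apply le_INR; exact HK|]. apply alg_lmax_pending; auto.
  - destruct (trail_split (Hh K)) as [hr1 [hr0 [E [HA HL]]]].
    eapply Rle_trans; [apply le_INR; exact HK|]. rewrite <- HL. rewrite E in HI |- *.
    apply alg_run_pending; auto.
Qed.

Lemma alg_big_real B : exists hr, Inv hr /\ Dok hr /\
  B < pend_num (build hr) (ALG (build hr)) s (W hr).
Proof.
  destruct (nat_above B) as [X0 HX0].
  destruct (alg_big (S X0) ltac:(lia)) as [hr [HI [HD Hbig]]].
  exists hr. split; auto. split; auto. rewrite S_INR in Hbig. lra.
Qed.

Theorem not_comp : ~ competitive n s lmin lmax ALG.
Proof.
  intros [x [[D HD']|[D HD']]].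
  - set (C := INR g + 1).
    assert (HC0 : 0 < C) by (unfold C; pose proof (pos_INR g); lra).
    destruct (alg_big_real ((Rabs x * lmax * C + Rabs D) / lmin)) as [hr [HI [HD Hbig]]].
    pose proof (opt_pending hr HD) as Hopt.
    change (pend_num (build hr) (Sopt hr) 1 (W hr)) with
      (cntP (Tk hr) (fun τ => pending (build hr) (Sopt hr) 1 τ (W hr))) in Hopt.
    pose proof (cntP_nonneg (Tk hr) (fun τ => pending (build hr) (Sopt hr) 1 τ (W hr))) as Hopt0.
    pose proof (Rabs_pos x). pose proof (Rle_abs x). pose proof (Rle_abs D).
    assert (Hcosts : forall t, In t (Tk hr) -> lmin <= cost t <= lmax).
    { intros t Ht. destruct (tk_cost hr t Ht) as [->| ->]; lra. }
    specialize (HD' (build hr) (wf_build hr) (W hr) (Sopt hr) (opt_valid hr HD)).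
    change (pend_cost (build hr) (ALG (build hr)) s (W hr)) with
      (sumC (Tk hr) (fun τ => pending (build hr) (ALG (build hr)) s τ (W hr))) in HD'.
    change (pend_cost (build hr) (Sopt hr) 1 (W hr)) with
      (sumC (Tk hr) (fun τ => pending (build hr) (Sopt hr) 1 τ (W hr))) in HD'.
    change (pend_num (build hr) (ALG (build hr)) s (W hr)) with
      (cntP (Tk hr) (fun τ => pending (build hr) (ALG (build hr)) s τ (W hr))) in Hbig.
    pose proof (sumC_ge (Tk hr) (fun τ => pending (build hr) (ALG (build hr)) s τ (W hr)) lmin
      (fun t Ht => proj1 (Hcosts t Ht))) as Ha1.
    pose proof (sumC_le (Tk hr) (fun τ => pending (build hr) (Sopt hr) 1 τ (W hr)) lmax
      (fun t Ht => proj2 (Hcosts t Ht))) as Ha2.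
    pose proof (sumC_ge (Tk hr) (fun τ => pending (build hr) (Sopt hr) 1 τ (W hr)) 0
      (fun t Ht => Rle_trans _ _ _ (Rlt_le _ _ Hlmin) (proj1 (Hcosts t Ht)))) as Ha3.
    set (a := sumC (Tk hr) (fun τ => pending (build hr) (ALG (build hr)) s τ (W hr))) in *.
    set (b := sumC (Tk hr) (fun τ => pending (build hr) (Sopt hr) 1 τ (W hr))) in *.
    set (na := cntP (Tk hr) (fun τ => pending (build hr) (ALG (build hr)) s τ (W hr))) in *.
    set (nb := cntP (Tk hr) (fun τ => pending (build hr) (Sopt hr) 1 τ (W hr))) in *.
    assert (Hb : 0 <= b <= lmax * C) by (assert (lmax * nb <= lmax * C) by (apply Rmult_le_compat_l; unfold C; lra); split; lra).
    assert (Hxb : x * b <= Rabs x * (lmax * C)) by nra.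
    apply (Rmult_lt_compat_l lmin) in Hbig; [|lra].
    replace (lmin * ((Rabs x * lmax * C + Rabs D) / lmin)) with (Rabs x * lmax * C + Rabs D)
      in Hbig by (field; lra).
    lra.
  - set (C := INR g + 1).
    destruct (alg_big_real (Rabs x * C + Rabs D)) as [hr [HI [HD Hbig]]].
    pose proof (opt_pending hr HD) as Hopt.
    pose proof (cntP_nonneg (Tk hr) (fun τ => pending (build hr) (Sopt hr) 1 τ (W hr))) as Hopt0.
    specialize (HD' (build hr) (wf_build hr) (W hr) (Sopt hr) (opt_valid hr HD)).
    change (pend_num (build hr) (Sopt hr) 1 (W hr)) with
      (cntP (Tk hr) (fun τ => pending (build hr) (Sopt hr) 1 τ (W hr))) in Hopt, HD'.
    pose proof (Rabs_pos x). pose proof (Rle_abs x). pose proof (Rle_abs D).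
    set (nb := cntP (Tk hr) (fun τ => pending (build hr) (Sopt hr) 1 τ (W hr))) in *.
    set (na := pend_num (build hr) (ALG (build hr)) s (W hr)) in *.
    assert (x * nb <= Rabs x * C) by (unfold C in *; nra).
    lra.
Qed.


End Main.


Theorem theorem2 (lmin lmax s : R) (gamma : nat) :
  0 < lmin -> lmin <= lmax -> 1 <= s ->
  (INR gamma * lmin + lmax) / s <= (INR gamma + 1) * lmin ->
  (forall g : nat, (INR g * lmin + lmax) / s <= (INR g + 1) * lmin ->
     (gamma <= g)%nat) ->
  s < lmax / lmin ->
  s < (INR gamma * lmin + lmax) / lmax ->
  forall n : nat, (1 <= n)%nat ->
  forall ALG : pattern -> schedule,
    online_alg n s lmin lmax ALG -> ~ competitive n s lmin lmax ALG.
Proof.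
  intros Hl Hle Hs1 Hg Hmin Ha Hb n Hn ALG Halg.
  assert (Hlt : lmin < lmax).
  { apply (Rmult_lt_compat_r lmin) in Ha; [|lra].
    replace (lmax / lmin * lmin) with lmax in Ha by (field; lra). nra. }
  assert (HP1 : forall j, (j < gamma)%nat -> (INR j + 1) * lmin < (INR j * lmin + lmax) / s).
  { intros j Hj. apply Rnot_le_lt. intros H. specialize (Hmin j H). lia. }
  assert (HP2 : lmax < (INR gamma * lmin + lmax) / s).
  { apply (Rmult_lt_compat_r lmax) in Hb; [|lra].
    replace ((INR gamma * lmin + lmax) / lmax * lmax) with (INR gamma * lmin + lmax) in Hb
      by (field; lra).
    apply (Rmult_lt_reg_r s); [lra|].
    replace ((INR gamma * lmin + lmax) / s * s) with (INR gamma * lmin + lmax) by (field; lra).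
    lra. }
  exact (not_comp lmin lmax s gamma n Hl Hlt Hs1 Hn HP1 HP2 ALG Halg).
Qed.
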